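(* Let $\mathcal{A}=\langle\Sigma,Q_\mathcal{A},q^0_\mathcal{A},\delta_\mathcal{A},\alpha_\mathcal{A}\rangle$ be a nice GFG-tNCW, let $\mathcal{S}$ be any frontier of $\mathcal{A}$, let $\mathcal{B}_\mathcal{S}$ be the automaton constructed from $\mathcal{A}$ and $\mathcal{S}$ (with any admissible choice of initial state), and let $\mathcal{C}$ be the quotient automaton constructed from $\mathcal{B}_\mathcal{S}$, as described in the context. Then $\mathcal{C}$ is $\alpha$-maximal up to homogeneity.
   Context: A tNCW is $\mathcal{A}=\langle\Sigma,Q,q_0,\delta,\alpha\rangle$: finite alphabet $\Sigma$, finite state set $Q$, initial state $q_0$, transition function $\delta:Q\times\Sigma\to 2^Q\setminus\{\emptyset\}$ with transition relation $\Delta=\{\langle q,\sigma,s\rangle:s\in\delta(q,\sigma)\}$, and $\alpha\subseteq\Delta$. $\alpha$-transitions are those in $\alpha$, $\bar\alpha$-transitions those in $\Delta\setminus\alpha$; $\delta^{\alpha}(q,\sigma)$, $\delta^{\bar\alpha}(q,\sigma)$ denote the $\sigma$-successors via $\alpha$-, resp. $\bar\alpha$-transitions. A run on $w=\sigma_1\sigma_2\cdots$ is $r_0r_1\cdots$ with $r_0=q_0$, $r_{i+1}\in\delta(r_i,\sigma_{i+1})$; accepting iff it traverses $\alpha$-transitions finitely often; $L(\mathcal{A})$ the accepted language. $\mathcal{A}^q$ is $\mathcal{A}$ with initial state $q$; $q\sim_\mathcal{A}s$ iff $L(\mathcal{A}^q)=L(\mathcal{A}^s)$. GFG: there is $f:\Sigma^*\to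 Q$ with $f(\epsilon)=q_0$, $\langle f(u),\sigma,f(u\sigma)\rangle\in\Delta$, and $f$'s run on every $w\in L(\mathcal{A})$ accepting; $q$ is GFG if $\mathcal{A}^q$ is. Semantically deterministic: all $\sigma$-successors of a state pairwise $\sim$; safe deterministic: $|\delta^{\bar\alpha}(q,\sigma)|\le 1$; normal: a $\bar\alpha$-path from $q$ to $s$ implies one from $s$ to $q$. Nice: all states reachable and GFG, normal, safe deterministic, semantically deterministic. Safe components: SCCs of the graph with edges $q\to q'$ iff $q'\in\delta^{\bar\alpha}(q,\sigma)$ for some $\sigma$; $\mathbb{S}(\mathcal{A})$ denotes their set. A run is safe if it uses no $\alpha$-transition; $L_{safe}(\mathcal{A}^q)$ is the set of words with a safe run from $q$. $q\approx_\mathcal{A}s$ iff $q\sim s$ and $L_{safe}(\mathcal{A}^q)=L_{safe}(\mathcal{A}^s)$; $q\precsim s$ iff $q\sim s$ and $L_{safe}(\mathcal{A}^q)\subseteq L_{safe}(\mathcal{A}^s)$. $\alpha$-homogenous: for all $q,\sigma$, $\delta^{\alpha}(q,\sigma)=\emptyset$ or $\delta^{\bar\alpha}(q,\sigma)=\emptyset$. An allowed transition of $\mathcal{A}$ is a triple $\langle q,\sigma,s\rangle\in Q\times\Sigma\times Q$ such that some $s'\sim s$ has $\langle q,\sigma,s'\rangle\in\Delta$. $\mathcal{A}$ is $\alpha$-maximal up to homogeneity if it is $\alpha$-homogenous and for every $q,\sigma$ with $\delta^{\bar\alpha}(q,\sigma)=\emptyset$ all allowed transitions in $\{q\}\times\{\sigma\}\times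 Q$ are in $\Delta$. Construction (Step 1): define $H\subseteq\mathbb{S}(\mathcal{A})^2$ by $H(S,S')$ iff there are $q\in S$, $q'\in S'$ with $q\precsim q'$. A set $\mathcal{S}\subseteq\mathbb{S}(\mathcal{A})$ is a frontier if for every $S\in\mathbb{S}(\mathcal{A})$ there is $S'\in\mathcal{S}$ with $H(S,S')$, and for distinct $S,S'\in\mathcal{S}$, neither $H(S,S')$ nor $H(S',S)$. Given a frontier $\mathcal{S}$, $\mathcal{B}_\mathcal{S}=\langle\Sigma,Q_\mathcal{S},q^0_\mathcal{S},\delta_\mathcal{S},\alpha_\mathcal{S}\rangle$ where $Q_\mathcal{S}$ is the union of the components in $\mathcal{S}$; $q^0_\mathcal{S}=q^0_\mathcal{A}$ if $q^0_\mathcal{A}\in Q_\mathcal{S}$, and otherwise $q^0_\mathcal{S}$ is some $q'\in Q_\mathcal{S}$ with $q^0_\mathcal{A}\precsim q'$; for $q\in Q_\mathcal{S}$ and $\sigma\in\Sigma$: if $\delta^{\bar\alpha}_\mathcal{A}(q,\sigma)\ne\emptyset$ then $\delta^{\bar\alpha}_\mathcal{S}(q,\sigma)=\delta^{\bar\alpha}_\mathcal{A}(q,\sigma)$ and $\delta^{\alpha}_\mathcal{S}(q,\sigma)=\emptyset$; otherwise $\delta^{\bar\alpha}_\mathcal{S}(q,\sigma)=\emptyset$ and $\delta^{\alpha}_\mathcal{S}(q,\sigma)=\{q'\in Q_\mathcal{S}:\exists q''\in\delta^\alpha_\mathcal{A}(q,\sigma),\ q'\sim_\mathcal{A}q''\}$.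 (Step 2): for $\mathcal{B}=\mathcal{B}_\mathcal{S}$ with states $Q$, initial state $q_0$, let $[q]=\{q':q\approx_\mathcal{B}q'\}$ and $\mathcal{C}=\langle\Sigma,\{[q]:q\in Q\},[q_0],\delta_\mathcal{C},\alpha_\mathcal{C}\rangle$, where $\langle[q],\sigma,[p]\rangle\in\Delta_\mathcal{C}$ iff there are $q'\in[q]$, $p'\in[p]$ with $\langle q',\sigma,p'\rangle\in\Delta_\mathcal{B}$, and such a transition is in $\alpha_\mathcal{C}$ iff $\langle q',\sigma,p'\rangle\in\alpha_\mathcal{B}$ (this is independent of the choice of $q',p'$). *)

(* Defs.v *)
From mathcomp Require Import all_boot.
From Stdlib Require Import Relations.
Set Implicit Arguments.
Unset Strict Implicit.
Unset Printing Implicit Defensive.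

(* A (transition-based) automaton over alphabet Sigma with state type Q.
   [tr q a s] : <q,a,s> is in Delta;  [acc q a s] : <q,a,s> is in alpha. *)
Record tNCW (Sigma Q : Type) := TNCW {
  init : Q;
  tr : Q -> Sigma -> Q -> Prop;
  acc : Q -> Sigma -> Q -> Prop }.

Section Generic.
Variables (Sigma Q : Type) (A : tNCW Sigma Q).

Definition wf_tNCW : Prop :=
  (forall q a, exists s, tr A q a s) /\
  (forall q a s, acc A q a s -> tr A q a s).

Definition alpha_tr q a s := tr A q a s /\ acc A q a s.
Definition safe_tr q a s := tr A q a s /\ ~ acc A q a s.

(* infinite words w = w 0, w 1, ...  (w i is the letter sigma_{i+1}) *)
Definition word := nat -> Sigma.

Definition run_from (q : Q) (w : word) (r : nat -> Q) : Prop :=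
  r 0 = q /\ forall i, tr A (r i) (w i) (r i.+1).

Definition accepting (w : word) (r : nat -> Q) : Prop :=
  exists N, forall i, N <= i -> ~ acc A (r i) (w i) (r i.+1).

Definition lang (q : Q) (w : word) : Prop :=
  exists r, run_from q w r /\ accepting w r.

Definition safe_lang (q : Q) (w : word) : Prop :=
  exists r, run_from q w r /\ forall i, ~ acc A (r i) (w i) (r i.+1).

Definition lang_equiv (q s : Q) : Prop := forall w, lang q w <-> lang s w.

Definition approx (q s : Q) : Prop :=
  lang_equiv q s /\ forall w, safe_lang q w <-> safe_lang s w.

Definition precsim (q s : Q) : Prop :=
  lang_equiv q s /\ forall w, safe_lang q w -> safe_lang s w.

Definition GFG_from (q : Q) : Prop :=
  exists f : seq Sigma -> Q,
    f [::] = q /\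
    (forall u a, tr A (f u) a (f (rcons u a))) /\
    (forall w : word, lang q w -> accepting w (fun i => f (mkseq w i))).

Definition GFG : Prop := GFG_from (init A).

Definition semantically_det : Prop :=
  forall q a s s', tr A q a s -> tr A q a s' -> lang_equiv s s'.

Definition safe_det : Prop :=
  forall q a s s', safe_tr q a s -> safe_tr q a s' -> s = s'.

Definition safe_edge (q q' : Q) : Prop := exists a, safe_tr q a q'.
Definition safe_reach : Q -> Q -> Prop := clos_refl_trans Q safe_edge.

Definition normal : Prop :=
  forall q s, safe_reach q s -> safe_reach s q.

Definition any_edge (q q' : Q) : Prop := exists a, tr A q a q'.

Definition all_reachable : Prop :=
  forall q, clos_refl_trans Q any_edge (init A) q.

Definition nice : Prop :=
  all_reachable /\ (forall q, GFG_from q) /\ normal /\ safe_det /\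
  semantically_det.

Definition alpha_homogenous : Prop :=
  forall q a, (~ exists s, alpha_tr q a s) \/ (~ exists s, safe_tr q a s).

Definition allowed (q : Q) (a : Sigma) (s : Q) : Prop :=
  exists s', lang_equiv s' s /\ tr A q a s'.

Definition alpha_maximal_up_to_homogeneity : Prop :=
  alpha_homogenous /\
  forall q a, (~ exists s, safe_tr q a s) ->
    forall s, allowed q a s -> tr A q a s.

End Generic.

Section Step1.
Variables (Sigma Q : finType) (A : tNCW Sigma Q).

Definition safe_component (S : {set Q}) : Prop :=
  exists q, forall q', q' \in S <-> (safe_reach A q q' /\ safe_reach A q' q).

Definition Hrel (S S' : {set Q}) : Prop :=
  exists q q', q \in S /\ q' \in S' /\ precsim A q q'.

Definition frontier (FS : {set {set Q}}) : Prop :=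
  (forall S, S \in FS -> safe_component S) /\
  (forall S, safe_component S -> exists2 S', S' \in FS & Hrel S S') /\
  (forall S S', S \in FS -> S' \in FS -> S != S' -> ~ Hrel S S' /\ ~ Hrel S' S).

End Step1.

Definition QS (Q : finType) (FS : {set {set Q}}) : {set Q} := \bigcup_(S in FS) S.

Definition QB (Q : finType) (FS : {set {set Q}}) : Type := {q : Q | q \in QS FS}.

Section Bconstr.
Variables (Sigma Q : finType) (A : tNCW Sigma Q) (FS : {set {set Q}}).

Definition admissible_init (q0 : QB FS) : Prop :=
  (init A \in QS FS -> val q0 = init A) /\
  (init A \notin QS FS -> precsim A (init A) (val q0)).

Definition has_safe (q : Q) (a : Sigma) : Prop := exists s, safe_tr A q a s.

Definition trB (q : QB FS) (a : Sigma) (q' : QB FS) : Prop :=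
  (has_safe (val q) a /\ safe_tr A (val q) a (val q')) \/
  (~ has_safe (val q) a /\
   exists q'', alpha_tr A (val q) a q'' /\ lang_equiv A (val q') q'').

Definition accB (q : QB FS) (a : Sigma) (q' : QB FS) : Prop :=
  ~ has_safe (val q) a /\
  exists q'', alpha_tr A (val q) a q'' /\ lang_equiv A (val q') q''.

Definition B_aut (q0 : QB FS) : tNCW Sigma (QB FS) := TNCW q0 trB accB.

End Bconstr.

Section Quotient.
Variables (Sigma P : Type) (B : tNCW Sigma P).

Definition cls (q : P) : P -> Prop := fun q' => approx B q q'.

Definition QC : Type := {X : P -> Prop | exists q, X = cls q}.

Definition trC (X : QC) (a : Sigma) (Y : QC) : Prop :=
  exists q' p', sval X q' /\ sval Y p' /\ tr B q' a p'.

Definition accC (X : QC) (a : Sigma) (Y : QC) : Prop :=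
  exists q' p', sval X q' /\ sval Y p' /\ tr B q' a p' /\ acc B q' a p'.

Definition cls_state (q : P) : QC := exist _ (cls q) (ex_intro _ q erefl).

Definition C_aut : tNCW Sigma QC := TNCW (cls_state (init B)) trC accC.

End Quotient.

Arguments admissible_init {Sigma Q} A FS q0.
Arguments B_aut {Sigma Q} A FS q0.

(* Main.v *)
Require Import Defs.
From mathcomp Require Import all_boot.
From Stdlib Require Import Relations Classical ClassicalEpsilon FunctionalExtensionality.
Set Implicit Arguments.
Unset Strict Implicit.
Unset Printing Implicit Defensive.

Definition wcons (S : Type) (a : S) (v : nat -> S) : nat -> S :=
  fun n => match n with 0 => a | n'.+1 => v n' end.
Definition sh (S : Type) (w : nat -> S) (i : nat) : nat -> S := fun n => w (i + n).

Lemma sh_cons (S : Type) (w : nat -> S) i : sh w i = wcons (w i) (sh w i.+1).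
Proof. apply: functional_extensionality => -[|n] /=; rewrite /sh ?addn0 //. by rewrite addSnnS. Qed.

Lemma sh0 (S : Type) (w : nat -> S) : sh w 0 = w.
Proof. by apply: functional_extensionality => n. Qed.

Lemma shS (S : Type) (w : nat -> S) i j : sh (sh w i) j = sh w (i + j).
Proof. apply: functional_extensionality => n; by rewrite /sh addnA. Qed.

Section Gen.
Variables (Sigma P : Type) (M : tNCW Sigma P).

Lemma lang_cons x a y v : tr M x a y -> lang M y v -> lang M x (wcons a v).
Proof.
move=> hxy [r [[r0 hr] [N hN]]].
exists (fun n => match n with 0 => x | n'.+1 => r n' end); split.
  split=> // -[|i] /=; first by rewrite r0. exact: hr.
exists N.+1 => -[|i] // hi. exact: hN.
Qed.

Lemma safe_cons x a y v : safe_tr M x a y -> safe_lang M y v -> safe_lang M x (wcons a v).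
Proof.
move=> [hxy hna] [r [[r0 hr] hN]].
exists (fun n => match n with 0 => x | n'.+1 => r n' end); split.
  split=> // -[|i] /=; first by rewrite r0. exact: hr.
move=> [|i] /=; first by rewrite r0. exact: hN.
Qed.

Lemma lang_tail x a v : lang M x (wcons a v) -> exists y, tr M x a y /\ lang M y v.
Proof.
move=> [r [[r0 hr] [N hN]]].
exists (r 1); split; first by have := hr 0; rewrite r0.
exists (fun n => r n.+1); split; first by split=> // i; exact: (hr i.+1).
exists N => i hi; apply: (hN i.+1); exact: leqW.
Qed.

Lemma safe_tail x a v : safe_lang M x (wcons a v) -> exists y, safe_tr M x a y /\ safe_lang M y v.
Proof.
move=> [r [[r0 hr] hN]].
exists (r 1); split; first by have := hr 0; have := hN 0; rewrite r0.
exists (fun n => r n.+1); split; first by split=> // i; exact: (hr i.+1).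
move=> i; exact: (hN i.+1).
Qed.

Lemma safe_lang_lang x v : safe_lang M x v -> lang M x v.
Proof. by move=> [r [hr hs]]; exists r; split=> //; exists 0 => i _; apply: hs. Qed.

Lemma approx_sym x y : approx M x y -> approx M y x.
Proof. by move=> [h1 h2]; split=> w; [rewrite h1|rewrite h2]. Qed.

Lemma approx_trans x y z : approx M x y -> approx M y z -> approx M x z.
Proof. by move=> [h1 h2] [h3 h4]; split=> w; [rewrite h1 h3|rewrite h2 h4]. Qed.

Lemma approx_refl x : approx M x x.
Proof. by split. Qed.

Lemma run_exists (R : P -> Sigma -> P -> Prop) (Pr : P -> Prop) :
  (forall x, Pr x -> exists a y, R x a y /\ Pr y) ->
  forall x, Pr x -> exists (w : nat -> Sigma) (r : nat -> P),
    r 0 = x /\ forall i, R (r i) (w i) (r i.+1).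
Proof.
move=> hstep x hx.
pose T := {x : P | Pr x}.
have hs : forall t : T, {p : Sigma * T | R (sval t) p.1 (sval p.2)}.
  move=> [t ht]; apply: constructive_indefinite_description.
  have [a [y [hr hy]]] := hstep t ht.
  by exists (a, exist _ y hy).
pose fix rs (n : nat) : T := match n with 0 => exist _ x hx | n'.+1 => (sval (hs (rs n'))).2 end.
exists (fun n => (sval (hs (rs n))).1), (fun n => sval (rs n)); split=> // i.
exact: (svalP (hs (rs i))).
Qed.

End Gen.

Definition pb (P : Prop) : bool := if excluded_middle_informative P then true else false.
Lemma pbP (P : Prop) : pb P <-> P.
Proof. rewrite /pb; case: excluded_middle_informative => //. Qed.

Lemma down (Pr : nat -> Prop) N : (forall j, N <= j -> Pr j) -> (forall j, Pr j.+1 -> Pr j) -> forall j, Pr j.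
Proof.
move=> h1 h2.
suff H : forall d j, N <= j + d -> Pr j by move=> j; apply: (H N j); exact: leq_addl.
elim=> [|d IH] j hj.
  rewrite addn0 in hj. exact: h1.
have [hjd|hjd] := leqP N (j + d); first exact: IH hjd.
apply: h2; apply: IH; by rewrite addSn -addnS.
Qed.

Section Main.
Variables (Sigma Q : finType) (A : tNCW Sigma Q) (FS : {set {set Q}}) (q0 : QB FS).
Hypotheses (wfA : wf_tNCW A) (niceA : nice A) (frA : frontier A FS).
Notation Bq := (B_aut A FS q0).

Let normalA : normal A. Proof. by case: niceA => _ [_ []]. Qed.
Let sdetA : safe_det A. Proof. by case: niceA => _ [_ [_ []]]. Qed.
Let semdetA : semantically_det A. Proof. by case: niceA => _ [_ [_ []]]. Qed.

Lemma res x x' a y y' : lang_equiv A x x' -> tr A x a y -> tr A x' a y' -> lang_equiv A y y'.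
Proof.
have key : forall x x' y y', lang_equiv A x x' -> tr A x a y -> tr A x' a y' ->
    forall v, lang A y v -> lang A y' v.
  move=> x1 x1' y1 y1' he h1 h1' v hv.
  have h2 : lang A x1' (wcons a v) by apply/he; exact: lang_cons h1 hv.
  have [z [hz hzv]] := lang_tail h2.
  by apply/(semdetA hz h1').
move=> he h h' v; split; first exact: key he h h' v.
apply: key h' h v => u; by rewrite he.
Qed.

Lemma safe_edge_live x y : safe_edge A x y -> exists v, safe_lang A y v.
Proof.
move=> hxy.
have hyx : safe_reach A y x by apply: normalA; exact: rt_step.
pose Pr u := safe_reach A u x /\ safe_reach A x u.
have hstep : forall u, Pr u -> exists a z, safe_tr A u a z /\ Pr z.
  move=> u [hux hxu]; move/clos_rt_rt1n_iff: hux => hux.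
  destruct hux as [|mid xx [a ha] h1].
    move: (hxy) => [a ha]; exists a, y; split=> //; split=> //; by apply: rt_step.
  exists a, mid; split=> //; split; first by apply clos_rt_rt1n_iff.
  apply: rt_trans hxu _; apply: rt_step; by exists a.
have [w [r [r0 hr]]] := run_exists hstep (conj hyx (rt_step _ _ _ _ hxy)).
exists w, r; split; first by split=> // i; case: (hr i).
by move=> i; case: (hr i).
Qed.

Lemma precsim_step x x' a y : precsim A x x' -> safe_tr A x a y ->
  (exists v, safe_lang A y v) -> exists y', safe_tr A x' a y' /\ precsim A y y'.
Proof.
move=> [hl hs] hxy [v hv].
have [y' [hy' _]] := safe_tail (hs _ (safe_cons hxy hv)).
exists y'; split=> //; split.
  apply: res hl _ _; [exact: hxy.1 | exact: hy'.1].
move=> u hu; have [y'' [hy'' hu']] := safe_tail (hs _ (safe_cons hxy hu)).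
by rewrite (sdetA hy' hy'').
Qed.

Lemma precsim_path x s x' : safe_reach A x s -> precsim A x x' ->
  exists s', precsim A s s' /\ safe_reach A x' s'.
Proof.
move/clos_rt_rt1n_iff => h; elim: h x' => [x0|x0 z s0 [a ha] _ IH] x' hp.
  by exists x'; split=> //; apply: rt_refl.
have [y' [hy' hpy]] := precsim_step hp ha (safe_edge_live (ex_intro _ a ha)).
have [s' [hs' hr]] := IH _ hpy; exists s'; split=> //.
apply: rt_trans hr; apply: rt_step; by exists a.
Qed.

Lemma comp_closed S x y : safe_component A S -> x \in S -> safe_reach A x y -> y \in S.
Proof.
move=> [r hr] /hr [hrx hxr] hxy; apply/hr; split; first exact: rt_trans hrx hxy.
apply: rt_trans _ hxr; exact: normalA.
Qed.

Lemma QS_closed x y : x \in QS FS -> safe_reach A x y -> y \in QS FS.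
Proof.
move=> /bigcupP [S hS hx] hxy; apply/bigcupP; exists S => //.
apply: comp_closed hx hxy; exact: frA.1.
Qed.

Lemma frontier_transfer s : exists g : QB FS, precsim A s (val g).
Proof.
pose SC := [set z | pb (safe_reach A s z /\ safe_reach A z s)].
have hSC : safe_component A SC.
  by exists s => z; rewrite inE; split => /pbP.
have [S' hS' [x [x' [hx [hx' hp]]]]] := frA.2.1 _ hSC.
move: hx; rewrite inE => /pbP [hsx hxs].
have [s' [hs' hr]] := precsim_path hxs hp.
have hin : s' \in QS FS.
  apply/bigcupP; exists S' => //; apply: comp_closed hx' hr; exact: frA.1 _ hS'.
by exists (exist _ s' hin).
Qed.

Lemma SB q w : safe_lang Bq q w <-> safe_lang A (val q) w.
Proof.
split.
  move=> [r [[r0 hr] hs]]; exists (fun i => val (r i)); split; last first.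
    move=> i hacc; apply: (hs i). 
    case: (hr i) => [[_ [ht hna]]|[hn hh]]; first by case: hna.
    by split.
  split; first by rewrite r0.
  move=> i; case: (hr i) => [[_ [ht hna]]|[hn hh]] //.
  by case: (hs i); split.
move=> [r [[r0 hr] hs]].
have hin : forall i, r i \in QS FS.
  elim=> [|i IH]; first by rewrite r0; exact: (valP q).
  apply: QS_closed IH _; apply: rt_step; exists (w i); split; [exact: hr | exact: hs].
exists (fun i => exist _ (r i) (hin i)); split.
  split; first by apply: val_inj; rewrite /= r0.
  move=> i; left; split; first by exists (r i.+1); split; [exact: hr | exact: hs].
  by split; [exact: hr | exact: hs].
move=> i [hn _]; apply: hn; exists (r i.+1); split; [exact: hr | exact: hs].
Qed.

Lemma trB_back (x y : QB FS) a v : trB A x a y -> lang A (val y) v -> lang A (val x) (wcons a v).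
Proof.
case=> [[_ [ht _]]|[_ [q'' [[ht _] he]]]] hv; first exact: lang_cons ht hv.
apply: lang_cons ht _; exact/he.
Qed.

Lemma LB_sub q w : lang Bq q w -> lang A (val q) w.
Proof.
move=> [b [[b0 hb] [N hN]]].
pose Pr j := lang A (val (b j)) (sh w j).
have: Pr 0.
  apply: (@down Pr N) => [j hj|j hj].
    apply: safe_lang_lang; apply/SB.
    exists (fun n => b (j + n)); split.
      split; first by rewrite addn0.
      move=> i; rewrite addnS; exact: hb.
    move=> i /=; rewrite addnS; apply: hN; exact: leq_trans hj (leq_addr _ _).
  rewrite /Pr sh_cons; exact: trB_back (hb j) hj.
by rewrite /Pr sh0 b0.
Qed.

Lemma LB_sup q w : lang A (val q) w -> lang Bq q w.
Proof.
move=> hw.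
case: (niceA) => _ [gfg _].
have [f [f0 [ftr facc]]] := gfg (val q).
pose t i := f (mkseq w i).
have ht : forall i, tr A (t i) (w i) (t i.+1) by move=> i; rewrite /t mkseqS; apply: ftr.
have [N hN] := facc w hw.
pose J s := sval (constructive_indefinite_description _ (frontier_transfer s)).
have hJ : forall s, precsim A s (val (J s)) by move=> s; exact: (svalP (constructive_indefinite_description _ (frontier_transfer s))).
have hN0 : forall (b : QB FS) a (t0 : Q), exists n : QB FS,
    (has_safe A (val b) a -> safe_tr A (val b) a (val n)) /\
    (~ has_safe A (val b) a -> n = J t0).
  move=> b a t0; case: (classic (has_safe A (val b) a)) => hs.
    move: (hs) => [y hy].
    have hin : y \in QS FS.
      apply: QS_closed (valP b) _; apply: rt_step; by exists a.
    by exists (exist _ y hin); split.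
  by exists (J t0); split.
pose Next b a t0 := sval (constructive_indefinite_description _ (hN0 b a t0)).
have hNext : forall b a t0, (has_safe A (val b) a -> safe_tr A (val b) a (val (Next b a t0))) /\
    (~ has_safe A (val b) a -> Next b a t0 = J t0).
  move=> b a t0; exact: (svalP (constructive_indefinite_description _ (hN0 b a t0))).
pose fix b i := match i with 0 => q | i'.+1 => Next (b i') (w i') (t i'.+1) end.
have bS : forall i, b i.+1 = Next (b i) (w i) (t i.+1) by [].
have hJsym : forall s, lang_equiv A (val (J s)) s by move=> s v; rewrite (hJ s).1.
have Inv : forall i, lang_equiv A (val (b i)) (t i).
  elim=> [|i IH]; first by rewrite /t /= f0.
  rewrite bS; case: (classic (has_safe A (val (b i)) (w i))) => hs.
    apply: res IH _ (ht i); exact: ((hNext _ _ _).1 hs).1.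
  rewrite ((hNext _ _ _).2 hs); exact: hJsym.
have htr : forall i, trB A (b i) (w i) (b i.+1).
  move=> i; case: (classic (has_safe A (val (b i)) (w i))) => hs.
    by left; split=> //; rewrite bS; exact: (hNext _ _ _).1.
  right; split=> //.
  have [s hs'] := wfA.1 (val (b i)) (w i).
  exists s; split.
    split=> //; apply: NNPP => hna; apply: hs; by exists s; split.
  rewrite bS ((hNext _ _ _).2 hs) => v.
  rewrite hJsym.
  have := res (fun u => iff_sym (Inv i u)) (ht i) hs'.
  by move=> /(_ v).
have tsafe : forall i, N <= i -> safe_lang A (t i) (sh w i).
  move=> i hi; exists (fun n => t (i + n)); split.
    split; first by rewrite addn0.
    move=> n; rewrite addnS; exact: ht.
  move=> n /=; rewrite addnS; apply: hN; exact: leq_trans hi (leq_addr _ _).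
exists b; split; first by split=> // i; exact: htr.
case: (classic (exists k, N <= k /\ ~ has_safe A (val (b k)) (w k))) => [[k [hk hnk]]|hno].
  have cl : forall n, safe_lang A (val (b (k.+1 + n))) (sh w (k.+1 + n)).
    elim=> [|n IH].
      rewrite addn0 bS ((hNext _ _ _).2 hnk); apply: (hJ _).2; apply: tsafe; exact: leqW.
    rewrite (sh_cons w) in IH; have [y [hy hyl]] := safe_tail IH.
    have hs : has_safe A (val (b (k.+1 + n))) (w (k.+1 + n)) by exists y.
    have := (hNext _ _ (t (k.+1 + n).+1)).1 hs; rewrite -bS => hy'.
    by rewrite addnS (sdetA hy' hy).
  exists k.+1 => i hi [hn _]; apply: hn.
  have := cl (i - k.+1); rewrite subnKC // (sh_cons w) => hcl.
  have [y [hy _]] := safe_tail hcl.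
  by exists y.
exists N => i hi [hn _]; apply: hn; apply: NNPP => hn'; apply: hno; by exists i.
Qed.

Lemma LB q w : lang Bq q w <-> lang A (val q) w.
Proof. split; [exact: LB_sub | exact: LB_sup]. Qed.

Lemma approxBA x y : approx Bq x y -> lang_equiv A (val x) (val y).
Proof. move=> [h _] v; rewrite -!LB; exact: h. Qed.

Lemma approxBS x y : approx Bq x y -> forall v, safe_lang A (val x) v <-> safe_lang A (val y) v.
Proof. move=> [_ h] v; rewrite -!SB; exact: h. Qed.

Lemma HT x y a : approx Bq x y -> has_safe A (val x) a -> has_safe A (val y) a.
Proof.
move=> hxy [z hz].
have [v hv] := safe_edge_live (ex_intro _ a hz).
have h1 := safe_cons hz hv.
have := (approxBS hxy _).1 h1 => h2.
have [z' [hz' _]] := safe_tail h2.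
by exists z'.
Qed.

Lemma mem_approx (X : QC Bq) x y : sval X x -> sval X y -> approx Bq x y.
Proof.
case: X => F [d hd] /= hx hy.
rewrite hd in hx hy.
exact: approx_trans (approx_sym hx) hy.
Qed.

Lemma trB_nosafe (x y : QB FS) a : trB A x a y -> ~ has_safe A (val x) a -> accB A x a y.
Proof. by case=> [[hs _] hn|h _] //; case: hn. Qed.

Lemma LC_sup (X : QC Bq) c w : sval X c -> lang A (val c) w -> lang (C_aut Bq) X w.
Proof.
move=> hc /LB_sup [b [[b0 hb] [N hN]]].
pose R i := match i with 0 => X | i'.+1 => cls_state Bq (b i'.+1) end.
have memR : forall i, sval (R i) (b i).
  case=> [|i] /=; first by rewrite b0.
  exact: approx_refl.
exists R; split.
  split=> // i; exists (b i), (b i.+1); split; first exact: memR.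
  split; [exact: memR | exact: hb].
exists N => i hi [x [p [hx [hp [_ [hn _]]]]]].
apply: (hN i hi); apply: trB_nosafe (hb i) _ => hs.
apply: hn; apply: HT hs; exact: mem_approx (memR i) hx.
Qed.

Lemma LC_sub (X : QC Bq) c w : sval X c -> lang (C_aut Bq) X w -> lang A (val c) w.
Proof.
move=> hc [R [[R0 hR] [N hN]]].
have hx : forall i, {q' | exists p', sval (R i) q' /\ sval (R i.+1) p' /\ trB A q' (w i) p'}.
  move=> i; apply: constructive_indefinite_description; exact: hR i.
pose x i := sval (hx i).
have hy : forall i, {p' | sval (R i) (x i) /\ sval (R i.+1) p' /\ trB A (x i) (w i) p'}.
  move=> i; apply: constructive_indefinite_description; exact: (svalP (hx i)).
pose y i := sval (hy i).
have hxy : forall i, sval (R i) (x i) /\ sval (R i.+1) (y i) /\ trB A (x i) (w i) (y i).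
  move=> i; exact: (svalP (hy i)).
have hsafe : forall i, N <= i -> safe_tr A (val (x i)) (w i) (val (y i)).
  move=> i hi; have [h1 [h2 h3]] := hxy i.
  case: h3 => [[_ //]|h3]; exfalso; apply: (hN i hi).
  exists (x i), (y i); do 3 (split=> //); by right.
pose Pr j := forall m, sval (R j) m -> lang A (val m) (sh w j).
have: Pr 0.
  apply: (@down Pr N) => [j hj|j hj].
    pose RR (p : Q * nat) (b : Sigma) (p' : Q * nat) :=
      p'.2 = p.2.+1 /\ b = w p.2 /\ safe_tr A p.1 b p'.1.
    pose PP (p : Q * nat) := N <= p.2 /\ forall v, safe_lang A (val (x p.2)) v -> safe_lang A p.1 v.
    have hstep : forall p, PP p -> exists b p', RR p b p' /\ PP p'.
      move=> [s i] [/= hi hsub].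
      have hs := hsafe i hi.
      have [v hv] := safe_edge_live (ex_intro _ (w i) hs).
      have [s' [hs' _]] := safe_tail (hsub _ (safe_cons hs hv)).
      exists (w i), (s', i.+1); split; first by split.
      split; first exact: leqW.
      move=> v' hv' /=.
      have hyx : approx Bq (y i) (x i.+1) by apply: mem_approx (hxy i).2.1 (hxy i.+1).1.
      have hv'' := (approxBS hyx v').2 hv'.
      have [s'' [hs'' hl]] := safe_tail (hsub _ (safe_cons hs hv'')).
      by rewrite (sdetA hs' hs'').
    have [w' [r [r0 hr]]] := run_exists hstep (conj hj (fun v h => h) : PP (val (x j), j)).
    have r2 : forall n, (r n).2 = j + n.
      elim=> [|n IH]; first by rewrite r0 addn0.
      by rewrite (hr n).1 IH addnS.
    have hxl : safe_lang A (val (x j)) (sh w j).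
      exists (fun n => (r n).1); split.
        split; first by rewrite r0.
        move=> n; have [_ [e h]] := hr n; move: h; rewrite /sh -r2 -e; case.
        by [].
      move=> n; have [_ [e h]] := hr n; move: h; rewrite /sh -r2 -e; case.
        by [].
    move=> m hm.
    have hmx := mem_approx hm (hxy j).1.
    apply/(approxBA hmx); exact: safe_lang_lang hxl.
  move=> m hm; rewrite (sh_cons w).
  have hmx := mem_approx hm (hxy j).1.
  apply/(approxBA hmx); apply: trB_back (hxy j).2.2 _.
  exact: hj _ (hxy j).2.1.
by move/(_ c); rewrite sh0 R0; apply.
Qed.

Lemma LC (X : QC Bq) c w : sval X c -> (lang (C_aut Bq) X w <-> lang A (val c) w).
Proof. by move=> hc; split; [exact: LC_sub | exact: LC_sup]. Qed.

Lemma main_sec : alpha_maximal_up_to_homogeneity (C_aut Bq).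
Proof.
split.
  move=> X a; case: (classic (exists S, alpha_tr (C_aut Bq) X a S)) => [[S1 [h1 hacc1]]|hn]; [right|by left].
  move=> [S2 [h2 hna2]].
  move: hacc1 h2 => [x [p [hx [hp [_ [hnx _]]]]]] [x1 [p1 [hx1 [hp1 ht1]]]].
  case: ht1 => [[hs _]|hacc].
    by apply: hnx; apply: HT hs; exact: mem_approx hx1 hx.
  apply: hna2; exists x1, p1; do 3 (split=> //); by right.
move=> X a hnos Y [Y' [hle htr]].
move: (htr) => [x1 [p1 [hx1 [hp1 ht1]]]].
have hns : ~ has_safe A (val x1) a.
  move=> hs; apply: hnos; exists Y'; split=> //.
  move=> [x [p [hx [hp [_ [hn _]]]]]]; apply: hn; apply: HT hs; exact: mem_approx hx1 hx.
case: ht1 => [[//]|[_ [q'' [hal he]]]].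
case: (svalP Y) => d hd.
have hdY : sval Y d by rewrite hd; exact: approx_refl.
exists x1, d; split=> //; split=> //; right; split=> //.
exists q''; split=> // v.
rewrite -(LC v hdY) -hle (LC v hp1); exact: he.
Qed.

End Main.

Theorem mainTheorem5 (Sigma Q : finType) (A : tNCW Sigma Q)
  (FS : {set {set Q}}) (q0 : QB FS) :
  wf_tNCW A -> nice A -> GFG A -> frontier A FS -> admissible_init A FS q0 ->
  alpha_maximal_up_to_homogeneity (C_aut (B_aut A FS q0)).
Proof.
move=> wfA niceA _ frA _; exact: (main_sec q0 wfA niceA frA).
Qed.
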